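(* Let $\lambda\geqslant\omega$ be a cardinal and $n$ a positive integer, and let $\mathscr{I}_\lambda^n$ carry any Hausdorff topology making it a topological semigroup. Then the Bohr compactification $B(\mathscr{I}_\lambda^n)$ of $\mathscr{I}_\lambda^n$ is a trivial (one-element) semigroup.
   Context: A topological semigroup is a Hausdorff space with a continuous associative multiplication. For a set $X$ of cardinality $\lambda$, $\mathscr{I}(X)$ is the semigroup of all partial one-to-one maps of $X$ (including the empty map) under composition; the rank of $\alpha$ is $|\operatorname{ran}\alpha|$, and $\mathscr{I}_\lambda^n=\{\alpha\in\mathscr{I}(X):\operatorname{rank}\alpha\leqslant n\}$. A Bohr compactification of a topological semigroup $S$ is a pair $(\beta,B(S))$ where $B(S)$ is a compact topological semigroup and $\beta\colon S\to B(S)$ is a continuous homomorphism such that for every continuous homomorphism $g\colon S\to T$ into a compact topological semigroup $T$ there is a unique continuous homomorphism $f\colon B(S)\to T$ with $g=\beta f$ (maps written on the right, so $(s)g=((s)\beta)f$). *)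

(* Defs.v *)
From Stdlib Require Import List Arith.
Import ListNotations.

Definition is_topology {T : Type} (open : (T -> Prop) -> Prop) : Prop :=
  open (fun _ => True) /\
  (forall U V, open U -> open V -> open (fun x => U x /\ V x)) /\
  (forall F : (T -> Prop) -> Prop, (forall U, F U -> open U) ->
     open (fun x => exists U, F U /\ U x)).

Definition hausdorff {T : Type} (open : (T -> Prop) -> Prop) : Prop :=
  forall x y : T, x <> y ->
    exists U V, open U /\ open V /\ U x /\ V y /\ (forall z, U z -> V z -> False).

Definition compact {T : Type} (open : (T -> Prop) -> Prop) : Prop :=
  forall F : (T -> Prop) -> Prop,
    (forall U, F U -> open U) ->
    (forall x, exists U, F U /\ U x) ->
    exists l : list (T -> Prop),
      (forall U, In U l -> F U) /\ (forall x, exists U, In U l /\ U x).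

Definition continuous {A B : Type} (openA : (A -> Prop) -> Prop)
  (openB : (B -> Prop) -> Prop) (f : A -> B) : Prop :=
  forall V, openB V -> openA (fun x => V (f x)).

(* Continuity of m : T x T -> T w.r.t. the product topology (written out
   via the basic open rectangles U x V). *)
Definition jointly_continuous {T : Type} (open : (T -> Prop) -> Prop)
  (m : T -> T -> T) : Prop :=
  forall x y W, open W -> W (m x y) ->
    exists U V, open U /\ open V /\ U x /\ V y /\
      (forall a b, U a -> V b -> W (m a b)).

Definition associative {S : Type} (m : S -> S -> S) : Prop :=
  forall a b c, m a (m b c) = m (m a b) c.

Definition is_topsemigroup {S : Type} (m : S -> S -> S)
  (open : (S -> Prop) -> Prop) : Prop :=
  is_topology open /\ hausdorff open /\ associative m /\
  jointly_continuous open m.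

Definition is_hom {S T : Type} (mS : S -> S -> S) (mT : T -> T -> T)
  (f : S -> T) : Prop :=
  forall a b, f (mS a b) = mT (f a) (f b).

Definition is_bohr_compactification
  {S : Type} (mS : S -> S -> S) (openS : (S -> Prop) -> Prop)
  {B : Type} (mB : B -> B -> B) (openB : (B -> Prop) -> Prop)
  (beta : S -> B) : Prop :=
  is_topsemigroup mB openB /\ compact openB /\
  continuous openS openB beta /\ is_hom mS mB beta /\
  forall (T : Type) (mT : T -> T -> T) (openT : (T -> Prop) -> Prop),
    is_topsemigroup mT openT -> compact openT ->
    forall g : S -> T, continuous openS openT g -> is_hom mS mT g ->
      exists! f : B -> T,
        continuous openB openT f /\ is_hom mB mT f /\
        forall s, g s = f (beta s).

(* partial maps X -> X as X -> option X *)
Definition pinjective {X : Type} (f : X -> option X) : Prop :=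
  forall x1 x2 y, f x1 = Some y -> f x2 = Some y -> x1 = x2.

Definition rank_le {X : Type} (n : nat) (f : X -> option X) : Prop :=
  exists l : list X, length l <= n /\ forall x y, f x = Some y -> In y l.

Definition I_n (X : Type) (n : nat) : Type :=
  { f : X -> option X | pinjective f /\ rank_le n f }.

(* composition with maps written on the right: x (a b) = (x a) b *)
Definition pcomp {X : Type} (f g : X -> option X) : X -> option X :=
  fun x => match f x with Some y => g y | None => None end.

Lemma pcomp_ok {X : Type} (n : nat) (f g : X -> option X) :
  pinjective f -> pinjective g -> rank_le n g ->
  pinjective (pcomp f g) /\ rank_le n (pcomp f g).
Proof.
  intros Hf Hg [l [Hl Hr]]; unfold pcomp; split.
  - intros x1 x2 y H1 H2.
    destruct (f x1) as [y1|] eqn:E1; [|discriminate].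
    destruct (f x2) as [y2|] eqn:E2; [|discriminate].
    assert (y1 = y2) by (eapply Hg; eauto). subst. eapply Hf; eauto.
  - exists l; split; [exact Hl|]. intros x y H.
    destruct (f x) as [z|]; [eapply Hr; eauto | discriminate].
Qed.

Definition I_mul {X : Type} {n : nat} (a b : I_n X n) : I_n X n :=
  exist _ (pcomp (proj1_sig a) (proj1_sig b))
    (pcomp_ok n _ _ (proj1 (proj2_sig a)) (proj1 (proj2_sig b))
                    (proj2 (proj2_sig b))).

(* X is infinite, i.e. |X| = lambda >= omega *)
Definition infinite_type (X : Type) : Prop :=
  forall l : list X, exists x, ~ In x l.

(* Main.v *)
Require Import Defs.
From Stdlib Require Import List Arith Lia Classical ClassicalEpsilon FunctionalExtensionality PropExtensionality ProofIrrelevance Cantor.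
Import ListNotations.

Section Key.
Variables (T : Type) (m : T -> T -> T) (open : (T -> Prop) -> Prop).
Hypothesis Htop : is_topsemigroup m open.
Hypothesis Hcpt : compact open.
Variables (A B : nat -> T) (p q : T).
Hypothesis HAB : forall i, m (A i) (B i) = p.
Hypothesis HABq : forall i j, i <> j -> m (A i) (B j) = q.

Definition bnd (U V : T -> Prop) := exists L : list nat, forall i, U (A i) -> V (B i) -> In i L.

Lemma bnd_local (Hpq : p <> q) : forall x y, exists U V, open U /\ open V /\ U x /\ V y /\ bnd U V.
Proof.
  destruct Htop as [Ht [Hh [Ha Hc]]].
  intros x y.
  destruct (classic (m x y = p)) as [E|E].
  - destruct (Hh p q Hpq) as [W [W' [HW [HW' [Wp [Wq Hd]]]]]].
    destruct (Hc x y W HW) as [U [V [HU [HV [Ux [Vy HUV]]]]]]; [rewrite E; exact Wp|].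
    exists U, V; repeat split; auto.
    destruct (classic (exists i, U (A i) /\ V (B i))) as [[i0 [H1 H2]]|N].
    + exists [i0]. intros i Hi1 Hi2. left.
      destruct (Nat.eq_dec i0 i) as [|n0]; auto.
      exfalso. apply (Hd q); [|exact Wq]. rewrite <- (HABq i0 i n0). apply HUV; auto.
    + exists []. intros i H1 H2. exfalso; apply N; eauto.
  - destruct (Hh (m x y) p E) as [W [W' [HW [HW' [Wp [Wq Hd]]]]]].
    destruct (Hc x y W HW Wp) as [U [V [HU [HV [Ux [Vy HUV]]]]]].
    exists U, V; repeat split; auto.
    exists []. intros i H1 H2. exfalso. apply (Hd p); [|exact Wq].
    rewrite <- (HAB i). apply HUV; auto.
Qed.

Lemma key : p = q.
Proof.
  destruct (classic (p = q)) as [|Hpq]; auto. exfalso.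
  pose proof (bnd_local Hpq) as BL.
  destruct Htop as [[Htrue [Hint Hun]] [Hh [Ha Hc]]].
  assert (Strip : forall x, exists U, open U /\ U x /\ exists L : list nat, forall i, U (A i) -> In i L).
  { intros x.
    destruct (Hcpt (fun V => open V /\ exists U, open U /\ U x /\ bnd U V)) as [l [Hl Hcov]].
    - intros V [H _]; exact H.
    - intros y. destruct (BL x y) as [U [V [? [? [? [? ?]]]]]]. exists V; split; eauto 7.
    - assert (G : exists U, open U /\ U x /\ forall V, In V l -> bnd U V).
      { clear Hcov. induction l as [|V l IH].
        - exists (fun _ => True); repeat split; auto. intros V [].
        - destruct IH as [U [HU [Ux HUl]]]. { intros; apply Hl; right; auto. }
          destruct (Hl V (or_introl eq_refl)) as [_ [U' [HU' [U'x [L HL]]]]].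
          exists (fun z => U z /\ U' z); repeat split; auto.
          intros V0 [<-|Hin].
          + exists L; intros i [_ H1] H2; auto.
          + destruct (HUl V0 Hin) as [L0 HL0]. exists L0; intros i [H1 _] H2; auto. }
      destruct G as [U [HU [Ux HUl]]].
      exists U; repeat split; auto.
      assert (D : forall l', (forall V0, In V0 l' -> bnd U V0) ->
                exists L, forall i, U (A i) -> (exists V0, In V0 l' /\ V0 (B i)) -> In i L).
      { clear. induction l' as [|V1 l' IH']; intros H.
        - exists []. intros i _ [V0 [F _]]. destruct F.
        - destruct (H V1 (or_introl eq_refl)) as [La HLa].
          destruct IH' as [Lb HLb]. { intros; apply H; right; auto. }
          exists (La ++ Lb). intros i Hi [V0 [[<-|Hin] HV0]]; apply in_or_app; [left|right]; eauto. }
      destruct (D l HUl) as [L HL]. exists L. intros i Hi. apply HL; auto. }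
  destruct (Hcpt (fun U => open U /\ exists L : list nat, forall i, U (A i) -> In i L)) as [l [Hl Hcov]].
  - intros U [H _]; exact H.
  - intros x. destruct (Strip x) as [U [? [? ?]]]. exists U; auto.
  - assert (D : forall l', (forall U, In U l' -> exists L : list nat, forall i, U (A i) -> In i L) ->
                exists L, forall i, (exists U, In U l' /\ U (A i)) -> In i L).
    { clear. induction l' as [|U1 l' IH']; intros H.
      - exists []. intros i [U0 [F _]]. destruct F.
      - destruct (H U1 (or_introl eq_refl)) as [La HLa].
        destruct IH' as [Lb HLb]. { intros; apply H; right; auto. }
        exists (La ++ Lb). intros i [U0 [[<-|Hin] HU0]]; apply in_or_app; [left|right]; eauto. }
    destruct (D l) as [L HL]. { intros U HU; destruct (Hl U HU) as [_ H]; exact H. }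
    assert (Hall : forall i, In i L) by (intros i; apply HL; apply Hcov).
    specialize (Hall (S (list_sum L))).
    assert (forall l0 k, In k l0 -> k <= list_sum l0).
    { induction l0 as [|a l0 IH]; simpl; [intros k []|]. intros k [->|H]; [lia|]. specialize (IH k H); lia. }
    specialize (H _ _ Hall). lia.
Qed.
End Key.

Definition dec (P : Prop) : {P} + {~ P}.
Proof.
  assert (H : exists b : bool, if b then P else ~ P).
  { destruct (classic P); [exists true|exists false]; auto. }
  destruct (constructive_indefinite_description _ H) as [[|] Hb]; [left|right]; auto.
Defined.

Fixpoint pos {X : Type} (y : X) (l : list X) : nat :=
  match l with [] => 0 | z :: l' => if dec (z = y) then 0 else S (pos y l') end.

Lemma pos_spec {X} (y d : X) l : In y l -> pos y l < length l /\ nth (pos y l) l d = y.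
Proof.
  induction l as [|z l IH]; simpl; [intros []|].
  intros H. destruct (dec (z = y)); simpl; [split; auto; lia|].
  destruct H as [->|H]; [congruence|]. destruct (IH H); split; auto; lia.
Qed.

Definition pinv {X : Type} (f : X -> option X) : X -> option X :=
  fun z => match dec (exists x, f x = Some z) with
           | left H => Some (proj1_sig (constructive_indefinite_description _ H))
           | right _ => None end.

Lemma pinv_spec {X} (f : X -> option X) z x : pinv f z = Some x -> f x = Some z.
Proof.
  unfold pinv. destruct (dec _) as [H|H]; [|discriminate].
  destruct (constructive_indefinite_description _ H) as [w Hw]; simpl; congruence.
Qed.

Lemma pinv_spec2 {X} (f : X -> option X) z x : pinjective f -> f x = Some z -> pinv f z = Some x.
Proof.
  intros Hi Hx. unfold pinv. destruct (dec _) as [H|H]; [|exfalso; eauto].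
  destruct (constructive_indefinite_description _ H) as [w Hw]; simpl. f_equal; eauto.
Qed.

Lemma pinv_none {X} (f : X -> option X) z : (forall x, f x <> Some z) -> pinv f z = None.
Proof.
  intros Hn. destruct (pinv f z) as [x|] eqn:E; auto. apply pinv_spec in E. exfalso; eapply Hn; eauto.
Qed.

Section Seq.
Variable X : Type.
Hypothesis Hinf : infinite_type X.
Definition pick (l : list X) : X := proj1_sig (constructive_indefinite_description _ (Hinf l)).
Lemma pick_spec l : ~ In (pick l) l.
Proof. unfold pick. destruct (constructive_indefinite_description _ _); auto. Qed.
Fixpoint lst (k : nat) : list X := match k with 0 => [] | S k => pick (lst k) :: lst k end.
Definition fseq (k : nat) : X := pick (lst k).
Lemma lst_in j k : j < k -> In (fseq j) (lst k).
Proof. induction k; simpl; intros H; [lia|]. destruct (Nat.eq_dec j k) as [->|]; [left; auto|right; apply IHk; lia]. Qed.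
Lemma fseq_inj j k : fseq j = fseq k -> j = k.
Proof.
  intros E. destruct (Nat.lt_total j k) as [H|[H|H]]; auto; exfalso.
  - apply (pick_spec (lst k)). fold (fseq k). rewrite <- E. apply lst_in; auto.
  - apply (pick_spec (lst j)). fold (fseq j). rewrite E. apply lst_in; auto.
Qed.
End Seq.

Lemma I_eq {X n} (a b : I_n X n) : (forall x, proj1_sig a x = proj1_sig b x) -> a = b.
Proof.
  destruct a as [a Ha], b as [b Hb]; simpl; intros H.
  assert (a = b) by (apply functional_extensionality; auto). subst. f_equal. apply proof_irrelevance.
Qed.

Lemma to_nat_inj a b : to_nat a = to_nat b -> a = b.
Proof. intros E. rewrite <- (cancel_of_to a), <- (cancel_of_to b), E. reflexivity. Qed.

Section Constr.
Variables (X : Type) (n : nat) (Hinf : infinite_type X) (L : list X) (HL : length L <= n).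

Definition phi (i : nat) (y : X) : option X :=
  if dec (In y L) then Some (fseq X Hinf (to_nat (i, pos y L))) else None.

Lemma phi_some i y z : phi i y = Some z -> In y L /\ z = fseq X Hinf (to_nat (i, pos y L)).
Proof. unfold phi; destruct (dec _); intros H; [inversion H; auto|discriminate]. Qed.

Lemma phi_inj i : pinjective (phi i).
Proof.
  intros y1 y2 z H1 H2. apply phi_some in H1 as [I1 ->]. apply phi_some in H2 as [I2 E].
  apply fseq_inj, to_nat_inj in E. inversion E.
  destruct (pos_spec y1 y1 L I1) as [_ E1]. destruct (pos_spec y2 y1 L I2) as [_ E2].
  congruence.
Qed.

Lemma phi_rank i : rank_le n (phi i).
Proof.
  exists (map (fun k => fseq X Hinf (to_nat (i, k))) (seq 0 (length L))).
  rewrite length_map, length_seq; split; auto.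
  intros y z H. apply phi_some in H as [I ->]. apply in_map_iff. exists (pos y L); split; auto.
  apply in_seq. destruct (pos_spec y y L I); lia.
Qed.

Lemma psi_inj i : pinjective (pinv (phi i)).
Proof. intros z1 z2 y H1 H2. apply pinv_spec in H1, H2. congruence. Qed.

Lemma psi_rank i : rank_le n (pinv (phi i)).
Proof.
  exists L; split; auto. intros z y H. apply pinv_spec, phi_some in H. tauto.
Qed.

Definition Phi i : I_n X n := exist _ (phi i) (conj (phi_inj i) (phi_rank i)).
Definition Psi i : I_n X n := exist _ (pinv (phi i)) (conj (psi_inj i) (psi_rank i)).
End Constr.

Definition zero (X : Type) (n : nat) : I_n X n.
Proof.
  exists (fun _ => None). split.
  - intros x1 x2 y H; discriminate.
  - exists []; simpl; split; [lia|]. intros x y H; discriminate.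
Defined.

Lemma prod_eq (X : Type) (n : nat) (Hinf : infinite_type X) (s : I_n X n) L (HL : length L <= n)
  (Hr : forall x y, proj1_sig s x = Some y -> In y L) i j :
  I_mul (I_mul s (Phi X n Hinf L HL i)) (Psi X n Hinf L HL j) = if Nat.eq_dec i j then s else zero X n.
Proof.
  apply I_eq. intros x. simpl. unfold pcomp.
  destruct (proj1_sig s x) as [y|] eqn:E; [|destruct (Nat.eq_dec i j); simpl; auto].
  pose proof (Hr _ _ E) as Iy.
  assert (P : phi X Hinf L i y = Some (fseq X Hinf (to_nat (i, pos y L)))) by (unfold phi; destruct (dec _); tauto).
  rewrite P. destruct (Nat.eq_dec i j) as [<-|Hij]; simpl.
  - rewrite E. apply pinv_spec2; auto. apply phi_inj.
  - apply pinv_none. intros w Hw. apply phi_some in Hw as [_ Hw].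
    apply fseq_inj in Hw. symmetry in Hw. change (to_nat (j, pos w L) = to_nat (i, pos y L)) in Hw. apply to_nat_inj in Hw. inversion Hw. auto.
Qed.

Theorem theorem10 :
  forall (X : Type) (n : nat),
    infinite_type X -> 1 <= n ->
    forall open : (I_n X n -> Prop) -> Prop,
      is_topsemigroup (@I_mul X n) open ->
      forall (B : Type) (mB : B -> B -> B) (openB : (B -> Prop) -> Prop)
             (beta : I_n X n -> B),
        is_bohr_compactification (@I_mul X n) open mB openB beta ->
        forall b1 b2 : B, b1 = b2.
Proof.
  intros X n Hinf _ open _ B mB openB beta [HtB [HcB [Hcont [Hhom Huniv]]]] b1 b2.
  set (e := beta (zero X n)).
  assert (Hconst : forall s, beta s = e).
  { intros s. destruct (proj2 (proj2_sig s)) as [L [HL Hr]].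
    apply (key B mB openB HtB HcB
             (fun i => beta (I_mul s (Phi X n Hinf L HL i)))
             (fun i => beta (Psi X n Hinf L HL i))).
    - intros i. cbv beta. rewrite <- Hhom, (prod_eq X n Hinf s L HL Hr i i).
      destruct (Nat.eq_dec i i); [reflexivity|congruence].
    - intros i j Hij. cbv beta. rewrite <- Hhom, (prod_eq X n Hinf s L HL Hr i j).
      destruct (Nat.eq_dec i j); [congruence|reflexivity]. }
  assert (Hee : mB e e = e).
  { unfold e. rewrite <- Hhom. rewrite !Hconst; reflexivity. }
  destruct HtB as [[Htrue [Hint Hun]] HtB'].
  destruct (Huniv B mB openB (conj (conj Htrue (conj Hint Hun)) HtB') HcB beta Hcont Hhom) as [f [_ Hf]].
  assert (E1 : f = fun b => b).
  { apply Hf. split; [|split].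
    - intros V HV; exact HV.
    - intros a b; reflexivity.
    - intros s; reflexivity. }
  assert (E2 : f = fun _ => e).
  { apply Hf. repeat split.
    - intros V HV. destruct (classic (V e)) as [Ve|Ve].
      + replace (fun _ : B => V e) with (fun _ : B => True); auto.
        apply functional_extensionality; intros; apply propositional_extensionality; tauto.
      + specialize (Hun (fun _ => False) (fun U H => False_ind _ H)).
        replace (fun _ : B => V e) with (fun x : B => exists U : B -> Prop, False /\ U x); auto.
        apply functional_extensionality; intros; apply propositional_extensionality; firstorder.
    - intros a b; simpl; symmetry; exact Hee.
    - intros s; apply Hconst. }
  assert (H1 : b1 = e) by (change ((fun b : B => b) b1 = e); rewrite <- E1, E2; reflexivity).
  assert (H2 : b2 = e) by (change ((fun b : B => b) b2 = e); rewrite <- E1, E2; reflexivity).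
  congruence.
Qed.
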